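(* Suppose the system is IFS$_m$, with a controller $\Psi:\mathcal{H}_-\to\mathbb{R}^m$ such that $\|\phi(k,\sigma,x_0,\Psi)\|\le C\gamma^k\|x_0\|$ for all $x_0\in\mathbb{R}^n,\sigma\in\Sigma^\omega,k\in\mathbb{N}$, with $C>1$, $\gamma\in[0,1)$. Then there exist a norm $V$ on $\mathbb{R}^n$ satisfying $\|x\|\le V(x)\le\frac{C}{1-\gamma}\|x\|$ for all $x$, and a static feedback $\Phi:\mathbb{R}^n\to\mathbb{R}^m$ that is homogeneous of degree 1 (i.e. $\Phi(\lambda x)=\lambda\Phi(x)$ for all $\lambda\in\mathbb{R}$, $x\in\mathbb{R}^n$) such that $$V(A_ix+B_i\Phi(x))\le\Big(1-\frac{1-\gamma}{C}\Big)V(x)\quad\text{for all }i\in\Sigma,\ x\in\mathbb{R}^n.$$ Consequently the closed loop $x(k+1)=A_{\sigma(k)}x(k)+B_{\sigma(k)}\Phi(x(k))$ is uniformly exponentially stable.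
   Context: Let $\Sigma$ be a finite nonempty set and $\{(A_i,B_i)\in\mathbb{R}^{n\times n}\times\mathbb{R}^{n\times m} : i\in\Sigma\}$. Consider $x(k+1)=A_{\sigma(k)}x(k)+B_{\sigma(k)}u(k)$, $k\in\mathbb{N}=\{0,1,\dots\}$, with arbitrary switching signal $\sigma:\mathbb{N}\to\Sigma$ (set of all such: $\Sigma^\omega$). $\|\cdot\|$ is the Euclidean norm. $\mathcal{H}_-$ is the set of all tuples $(x_k,\dots,x_0;\,i_{k-1},\dots,i_0)$ with $k\in\mathbb{N}$, $x_j\in\mathbb{R}^n$, $i_j\in\Sigma$ (mode string empty when $k=0$). For a function $\Psi:\mathcal{H}_-\to\mathbb{R}^m$ (a current-mode-independent controller with memory), $\phi(k,\sigma,x_0,\Psi)$ denotes the closed-loop trajectory defined by $x(0)=x_0$ and $x(k+1)=A_{\sigma(k)}x(k)+B_{\sigma(k)}\Psi(x(k),\dots,x(0);\,\sigma(k-1),\dots,\sigma(0))$. The system is IFS$_m$ if there exists such $\Psi$ with constants $M>0,\gamma\in[0,1)$ such that $\|\phi(k,\sigma,x_0,\Psi)\|\le M\gamma^k\|x_0\|$ for all $x_0,\sigma,k$. A closed loop is uniformly exponentially stable if there exist $M>0,\gamma\in[0,1)$ with $\|x(k)\|\le M\gamma^k\|x(0)\|$ for all initial states, all $\sigma\in\Sigma^\omega$ and all $k\in\mathbb{N}$. *)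

(* Defs.v *)
From HB Require Import structures.
From mathcomp Require Import all_boot all_order all_algebra.
From mathcomp Require Import reals.
Set Implicit Arguments. Unset Strict Implicit. Unset Printing Implicit Defensive.
Import Order.TTheory GRing.Theory Num.Theory.
Local Open Scope ring_scope.

Section Defs.
Variables (R : realType) (n m : nat) (Sigma : finType).

Definition enorm (x : 'cV[R]_n) : R := Num.sqrt (\sum_(i < n) x i ord0 ^+ 2).

Definition is_norm (V : 'cV[R]_n -> R) : Prop :=
  [/\ forall x, 0 <= V x,
      forall x, V x = 0 -> x = 0,
      forall (l : R) x, V (l *: x) = `|l| * V x &
      forall x y, V (x + y) <= V x + V y].

(* A history (x_k,...,x_0; i_{k-1},...,i_0) in H_- is encoded by the pair of
   sequences [:: x_k; ...; x_0] and [:: i_{k-1}; ...; i_0]. *)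
Definition controller := seq 'cV[R]_n -> seq Sigma -> 'cV[R]_m.

Definition modes_hist (s : nat -> Sigma) (k : nat) : seq Sigma :=
  rev (mkseq s k).

Variables (A : Sigma -> 'M[R]_n) (B : Sigma -> 'M[R]_(n, m)).

Fixpoint state_hist (Psi : controller) (s : nat -> Sigma) (x0 : 'cV[R]_n)
    (k : nat) : seq 'cV[R]_n :=
  match k with
  | 0 => [:: x0]
  | k'.+1 =>
      let h := state_hist Psi s x0 k' in
      (A (s k') *m head 0 h + B (s k') *m Psi h (modes_hist s k')) :: h
  end.

Definition traj (Psi : controller) (s : nat -> Sigma) (x0 : 'cV[R]_n) (k : nat)
  : 'cV[R]_n := head 0 (state_hist Psi s x0 k).

Fixpoint traj_static (Phi : 'cV[R]_n -> 'cV[R]_m) (s : nat -> Sigma)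
    (x0 : 'cV[R]_n) (k : nat) : 'cV[R]_n :=
  match k with
  | 0 => x0
  | k'.+1 => let x := traj_static Phi s x0 k' in A (s k') *m x + B (s k') *m Phi x
  end.

Definition UES_static (Phi : 'cV[R]_n -> 'cV[R]_m) : Prop :=
  exists (M g : R), [/\ 0 < M, 0 <= g, g < 1 &
    forall (x0 : 'cV[R]_n) (s : nat -> Sigma) (k : nat),
      enorm (traj_static Phi s x0 k) <= M * g ^+ k * enorm x0].

End Defs.

(* Main.v *)
Require Import Defs.
From HB Require Import structures.
From mathcomp Require Import all_boot all_order all_algebra.
From mathcomp Require Import boolp classical_sets reals ring lra.
Import Order.TTheory GRing.Theory Num.Theory.
Set Implicit Arguments. Unset Strict Implicit. Unset Printing Implicit Defensive.
Local Open Scope ring_scope.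

Section Enorm.
Variables (R : realType) (n : nat).

Lemma cs_ineq (f g : 'I_n -> R) :
  \sum_i f i * g i <= Num.sqrt (\sum_i f i ^+ 2) * Num.sqrt (\sum_i g i ^+ 2).
Proof.
set a := \sum_i f i ^+ 2; set b := \sum_i g i ^+ 2; set c := \sum_i f i * g i.
have a0 : 0 <= a by apply: sumr_ge0 => i _; exact: sqr_ge0.
have b0 : 0 <= b by apply: sumr_ge0 => i _; exact: sqr_ge0.
set sa := Num.sqrt a; set sb := Num.sqrt b.
have sa2 : sa ^+ 2 = a by rewrite sqr_sqrtr.
have sb2 : sb ^+ 2 = b by rewrite sqr_sqrtr.
have sa0 : 0 <= sa by exact: sqrtr_ge0.
have sb0 : 0 <= sb by exact: sqrtr_ge0.
have E : \sum_i (f i * sb - g i * sa) ^+ 2 = sb ^+ 2 * a - (sa * sb) *+ 2 * c + sa ^+ 2 * b.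
  transitivity (\sum_i (sb ^+ 2 * f i ^+ 2 - (sa * sb) *+ 2 * (f i * g i) + sa ^+ 2 * g i ^+ 2)).
    by apply: eq_bigr => i _; ring.
  by rewrite big_split sumrB /= /a /b /c !mulr_sumr.
have S0 : 0 <= \sum_i (f i * sb - g i * sa) ^+ 2 by apply: sumr_ge0 => i _; exact: sqr_ge0.
rewrite E sa2 sb2 in S0.
have [p0|] := ltP 0 (sa * sb).
  have : (sa * sb) *+ 2 * c <= (sa * sb) *+ 2 * (sa * sb).
    rewrite -[X in _ <= X](_ : a * b *+ 2 = _); first lra.
    by rewrite -sa2 -sb2; ring.
  by rewrite ler_pM2l // pmulrn_lgt0.
move=> le0; have /eqP : sa * sb = 0 by apply/eqP; rewrite eq_le le0 mulr_ge0.
rewrite mulf_eq0 => /orP[] /eqP z.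
  have : a = 0 by rewrite -sa2 z expr2 mulr0.
  move/eqP; rewrite psumr_eq0 => [/allP H|i _]; last exact: sqr_ge0.
  rewrite /c big1 ?z ?mul0r // => i _.
  by have := H i (mem_index_enum i); rewrite /= sqrf_eq0 => /eqP ->; rewrite mul0r.
have : b = 0 by rewrite -sb2 z expr2 mulr0.
move/eqP; rewrite psumr_eq0 => [/allP H|i _]; last exact: sqr_ge0.
rewrite /c big1 ?z ?mulr0 // => i _.
by have := H i (mem_index_enum i); rewrite /= sqrf_eq0 => /eqP ->; rewrite mulr0.
Qed.


Implicit Types x y : 'cV[R]_n.

Lemma enorm_ge0 x : 0 <= enorm x.
Proof. exact: sqrtr_ge0. Qed.

Lemma enorm_eq0 x : enorm x = 0 -> x = 0.
Proof.
move/eqP; rewrite /enorm sqrtr_eq0 => H.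
have : \sum_(i < n) x i ord0 ^+ 2 == 0.
  by rewrite eq_le H sumr_ge0 // => i _; exact: sqr_ge0.
rewrite psumr_eq0 => [/allP H2|i _]; last exact: sqr_ge0.
apply/matrixP => i j; rewrite (ord1 j) mxE.
by have := H2 i (mem_index_enum i); rewrite /= sqrf_eq0 => /eqP.
Qed.

Lemma enorm0 : enorm (0 : 'cV[R]_n) = 0.
Proof. by rewrite /enorm big1 ?sqrtr0 // => i _; rewrite mxE expr0n. Qed.

Lemma enormZ (l : R) x : enorm (l *: x) = `|l| * enorm x.
Proof.
rewrite /enorm (eq_bigr (fun i => l ^+ 2 * x i ord0 ^+ 2)); last first.
  by move=> i _; rewrite mxE exprMn.
by rewrite -mulr_sumr sqrtrM ?sqr_ge0 // sqrtr_sqr.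
Qed.

Lemma enormD x y : enorm (x + y) <= enorm x + enorm y.
Proof.
have h1 := enorm_ge0 x; have h2 := enorm_ge0 y.
rewrite -(@ler_pXn2r _ 2) ?nnegrE ?addr_ge0 ?enorm_ge0 //.
rewrite /enorm sqr_sqrtr ?sumr_ge0 // => [|i _]; last exact: sqr_ge0.
rewrite sqrrD !sqr_sqrtr ?sumr_ge0 // => [|i _|i _]; try exact: sqr_ge0.
rewrite (eq_bigr (fun i => x i ord0 ^+ 2 + (x i ord0 * y i ord0) *+ 2 + y i ord0 ^+ 2)); last first.
  by move=> i _; rewrite mxE sqrrD.
rewrite !big_split /= mulr2n.
have := cs_ineq (fun i => x i ord0) (fun i => y i ord0). lra.
Qed.

End Enorm.

Local Open Scope classical_set_scope.
Local Open Scope ring_scope.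
Section Main.
Variables (R : realType) (n m : nat) (Sigma : finType).
Variables (A : Sigma -> 'M[R]_n) (B : Sigma -> 'M[R]_(n, m)).
Variable (s0 : Sigma).

Definition strat := seq Sigma -> 'cV[R]_m.

Fixpoint tr (x : 'cV[R]_n) (w : strat) (s : nat -> Sigma) (k : nat) : 'cV[R]_n :=
  match k with
  | 0 => x
  | k'.+1 => A (s k') *m tr x w s k' + B (s k') *m w (modes_hist s k')
  end.

Definition psum x w s N := \sum_(k < N) enorm (tr x w s k).
Definition costset x w : set R := fun r => exists s N, r = psum x w s N.
Definition good x w := exists M, forall s N, psum x w s N <= M.
Definition cost x w := sup (costset x w).
Definition J x := inf (fun c => exists w, good x w /\ c = cost x w).

Definition sadd (w1 w2 : strat) : strat := fun h => w1 h + w2 h.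
Definition sscale (l : R) (w : strat) : strat := fun h => l *: w h.

Lemma trD x y w1 w2 s k : tr (x + y) (sadd w1 w2) s k = tr x w1 s k + tr y w2 s k.
Proof.
elim: k => [//|k IH] /=; rewrite IH /sadd !mulmxDr.
by rewrite addrACA.
Qed.

Lemma trZ l x w s k : tr (l *: x) (sscale l w) s k = l *: tr x w s k.
Proof.
elim: k => [//|k IH] /=; rewrite IH /sscale -!scalemxAr.
by rewrite scalerDr.
Qed.

Lemma psum_ge0 x w s N : 0 <= psum x w s N.
Proof. by apply: sumr_ge0 => k _; exact: enorm_ge0. Qed.

Lemma psum1 x w s : psum x w s 1 = enorm x.
Proof. by rewrite /psum big_ord1. Qed.

Lemma psumD x y w1 w2 s N :
  psum (x + y) (sadd w1 w2) s N <= psum x w1 s N + psum y w2 s N.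
Proof.
rewrite /psum -big_split /=; apply: ler_sum => k _.
by rewrite trD; exact: enormD.
Qed.

Lemma psumZ l x w s N : psum (l *: x) (sscale l w) s N = `|l| * psum x w s N.
Proof.
rewrite /psum mulr_sumr; apply: eq_bigr => k _.
by rewrite trZ enormZ.
Qed.

Lemma psum_le_cost x w s N : good x w -> psum x w s N <= cost x w.
Proof.
move=> [M HM]; apply: (ub_le_sup); last by exists s, N.
by exists M => r [s' [N' ->]].
Qed.

Lemma cost_le x w M : (forall s N, psum x w s N <= M) -> cost x w <= M.
Proof.
move=> HM; apply: ge_sup; first by exists (psum x w (fun=> s0) 0), (fun=> s0), 0%N.
by move=> r [s' [N' ->]].
Qed.

Lemma enorm_le_cost x w : good x w -> enorm x <= cost x w.
Proof. by move=> g; rewrite -(psum1 x w (fun=> s0)); exact: psum_le_cost. Qed.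

Lemma goodD x y w1 w2 : good x w1 -> good y w2 -> good (x + y) (sadd w1 w2).
Proof.
move=> [M1 H1] [M2 H2]; exists (M1 + M2) => s N.
apply: le_trans (psumD _ _ _ _ _ _) _; exact: lerD.
Qed.

Lemma goodZ l x w : good x w -> good (l *: x) (sscale l w).
Proof.
move=> [M H]; exists (`|l| * M) => s N.
by rewrite psumZ ler_wpM2l.
Qed.

Lemma costD x y w1 w2 : good x w1 -> good y w2 ->
  cost (x + y) (sadd w1 w2) <= cost x w1 + cost y w2.
Proof.
move=> g1 g2; apply: cost_le => s N.
apply: le_trans (psumD _ _ _ _ _ _) _.
by apply: lerD; exact: psum_le_cost.
Qed.

Lemma costZ l x w : good x w -> cost (l *: x) (sscale l w) <= `|l| * cost x w.
Proof.
move=> g; apply: cost_le => s N.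
by rewrite psumZ ler_wpM2l // psum_le_cost.
Qed.

Variable K1 : R.
Hypothesis Hex : forall x, exists w, forall s N, psum x w s N <= K1 * enorm x.

Lemma Jset_ne x : (fun c => exists w, good x w /\ c = cost x w) !=set0.
Proof.
have [w Hw] := Hex x.
by exists (cost x w), w; split => //; exists (K1 * enorm x).
Qed.

Lemma J_le_cost x w : good x w -> J x <= cost x w.
Proof.
move=> g; apply: ge_inf; last by exists w.
exists 0 => c [w' [g' ->]].
exact: (le_trans (enorm_ge0 _) (enorm_le_cost g')).
Qed.

Lemma J_ge x : enorm x <= J x.
Proof.
apply: lb_le_inf; first exact: Jset_ne.
by move=> c [w [g ->]]; exact: enorm_le_cost.
Qed.

Lemma J_ge0 x : 0 <= J x.
Proof. exact: le_trans (enorm_ge0 _) (J_ge x). Qed.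

Lemma J_le x : J x <= K1 * enorm x.
Proof.
have [w Hw] := Hex x.
have g : good x w by exists (K1 * enorm x).
by apply: le_trans (J_le_cost g) _; exact: cost_le.
Qed.

Lemma J_adh x eps : 0 < eps -> exists w, good x w /\ cost x w < J x + eps.
Proof.
move=> e0; have [|c [w [g ->]] H] := @inf_adherent R (fun c => exists w, good x w /\ c = cost x w) eps e0.
  split; first exact: Jset_ne.
  exists 0 => c [w' [g' ->]].
  exact: le_trans (enorm_ge0 _) (enorm_le_cost g').
by exists w.
Qed.

Lemma J_sub x y : J (x + y) <= J x + J y.
Proof.
have H : forall w1 w2, good x w1 -> good y w2 -> J (x + y) <= cost x w1 + cost y w2.
  move=> w1 w2 g1 g2; apply: le_trans (costD g1 g2).
  exact/J_le_cost/goodD.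
have H2 : forall w2, good y w2 -> J (x + y) - cost y w2 <= J x.
  move=> w2 g2; apply: lb_le_inf; first exact: Jset_ne.
  move=> c [w1 [g1 ->]]; have := H _ _ g1 g2; lra.
have : J (x + y) - J x <= J y.
  apply: lb_le_inf; first exact: Jset_ne.
  move=> c [w2 [g2 ->]]; have := H2 _ g2; lra.
lra.
Qed.

Lemma J_Zle l x : J (l *: x) <= `|l| * J x.
Proof.
have H : forall w, good x w -> J (l *: x) <= `|l| * cost x w.
  move=> w g; apply: le_trans (costZ l g).
  exact/J_le_cost/goodZ.
have [l0|l0] := eqVneq l 0.
  have [w Hw] := Hex x.
  have g : good x w by exists (K1 * enorm x).
  by have := H w g; rewrite l0 normr0 !mul0r.
have la : 0 < `|l| by rewrite normr_gt0.
rewrite -ler_pdivrMl //; apply: lb_le_inf; first exact: Jset_ne.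
by move=> c [w [g ->]]; rewrite ler_pdivrMl // H.
Qed.

Lemma J_Z l x : J (l *: x) = `|l| * J x.
Proof.
apply/eqP; rewrite eq_le J_Zle /=.
have [->|l0] := eqVneq l 0.
  by rewrite normr0 mul0r J_ge0.
have := J_Zle l^-1 (l *: x).
rewrite scalerA mulVf // scale1r normrV ?unitfE // => H.
have la : 0 < `|l| by rewrite normr_gt0.
by rewrite -ler_pdivlMl // mulrC -[_ / _]mulrC.
Qed.

Lemma J_eq0 x : J x = 0 -> x = 0.
Proof.
move=> H; apply: enorm_eq0; apply/eqP; rewrite eq_le enorm_ge0 andbT.
by rewrite -H J_ge.
Qed.

Lemma J0 : J 0 = 0.
Proof. by rewrite -(scale0r (0 : 'cV[R]_n)) J_Z normr0 mul0r. Qed.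


Definition scons (i : Sigma) (s : nat -> Sigma) : nat -> Sigma :=
  fun k => if k is k'.+1 then s k' else i.

Lemma mh_scons i s k : modes_hist (scons i s) k.+1 = rcons (modes_hist s k) i.
Proof.
rewrite /modes_hist /mkseq /= rev_cons; congr (rcons (rev _) _).
have -> : iota 1 k = map (addn 1) (iota 0 k) by rewrite -iotaDl.
by rewrite -map_comp; apply: eq_map.
Qed.

Lemma tr_scons x w i s k :
  tr x w (scons i s) k.+1 = tr (A i *m x + B i *m w [::]) (fun h => w (rcons h i)) s k.
Proof.
elim: k => [//|k IH].
transitivity (A (s k) *m tr x w (scons i s) k.+1 + B (s k) *m w (modes_hist (scons i s) k.+1)); first by [].
by rewrite IH mh_scons.
Qed.

Lemma psum_scons x w i s N :
  psum x w (scons i s) N.+1 =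
  enorm x + psum (A i *m x + B i *m w [::]) (fun h => w (rcons h i)) s N.
Proof.
rewrite /psum big_ord_recl /=; congr (_ + _).
by apply: eq_bigr => k _; rewrite -tr_scons.
Qed.

Lemma dp x eps : 0 < eps -> exists u, forall i,
  J (A i *m x + B i *m u) <= J x + eps - enorm x.
Proof.
move=> e0; have [w [g Hc]] := J_adh x e0.
exists (w [::]) => i.
set w' := fun h => w (rcons h i).
have H : forall s N, psum (A i *m x + B i *m w [::]) w' s N <= cost x w - enorm x.
  move=> s N; have := psum_le_cost (scons i s) N.+1 g.
  rewrite psum_scons; lra.
have g' : good (A i *m x + B i *m w [::]) w' by exists (cost x w - enorm x).
apply: le_trans (J_le_cost g') _.
apply: le_trans (cost_le H) _; lra.
Qed.

Variable K : R.
Hypothesis K0 : 0 < K.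
Hypothesis K1K : K1 < K.

Lemma contr x : exists u, forall i,
  J (A i *m x + B i *m u) <= (1 - K^-1) * J x.
Proof.
have [->|x0] := eqVneq x 0.
  exists 0 => i; rewrite !mulmx0 addr0 J0 mulr0; exact: lexx.
have ex : 0 < enorm x.
  rewrite lt_def enorm_ge0 andbT; apply/eqP => /enorm_eq0 h.
  by rewrite h eqxx in x0.
have q : 0 < 1 - K1 / K by rewrite subr_gt0 ltr_pdivrMr // mul1r.
have [u Hu] := dp x (mulr_gt0 ex q).
exists u => i; apply: le_trans (Hu i) _.
have HJ := J_le x.
have : J x / K <= K1 * enorm x / K by rewrite ler_pM2r // invr_gt0.
have e1 : enorm x * (1 - K1 / K) = enorm x - K1 * enorm x / K by rewrite mulrBr mulr1 mulrA [enorm x * K1]mulrC.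
have e2 : (1 - K^-1) * J x = J x - J x / K by rewrite mulrBl mul1r mulrC.
rewrite e1 e2; lra.
Qed.

End Main.

Lemma homog_select (R : realType) n m (P : 'cV[R]_n -> 'cV[R]_m -> Prop) :
  (forall l x u, P x u -> P (l *: x) (l *: u)) -> (forall x, exists u, P x u) ->
  exists Phi : 'cV[R]_n -> 'cV[R]_m,
    (forall l x, Phi (l *: x) = l *: Phi x) /\ forall x, P x (Phi x).
Proof.
move=> Ph Pe.
pose line (x : 'cV[R]_n) : set 'cV[R]_n := fun y => exists l, l != 0 /\ y = l *: x.
pose rep x := xget 0 (line x).
pose mu x := xget 0 (fun c : R => x = c *: rep x).
pose uu x := xget 0 (P (rep x)).
pose Phi x := if x == 0 then 0 else mu x *: uu x.
have repP : forall x, x != 0 -> exists2 c, c != 0 & rep x = c *: x.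
  move=> x x0; have : line x (rep x) by apply: xgetPex; exists x, 1; rewrite oner_eq0 scale1r.
  by case=> c [c0 ->]; exists c.
have rep0 : forall x, x != 0 -> rep x != 0.
  move=> x x0; have [c c0 ->] := repP x x0; by rewrite scaler_eq0 negb_or c0.
have muP : forall x, x != 0 -> x = mu x *: rep x.
  move=> x x0; apply: (@xgetPex _ 0 (fun c : R => x = c *: rep x)).
  have [c c0 ->] := repP x x0; exists c^-1; by rewrite scalerA mulVf // scale1r.
have uuP : forall x, P (rep x) (uu x) by move=> x; apply: xgetPex; exact: Pe.
exists Phi; split; last first.
  move=> x; rewrite /Phi; case: eqP => [->|/eqP x0].
    have [u Pu] := Pe 0; have := Ph 0 0 u Pu; by rewrite !scale0r.
  by rewrite {1}(muP x x0); apply: Ph.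
move=> l x; rewrite /Phi.
have [->|x0] := eqVneq x 0; first by rewrite scaler0 eqxx scaler0.
have [->|l0] := eqVneq l 0; first by rewrite scale0r eqxx scale0r.
have lx0 : l *: x != 0 by rewrite scaler_eq0 negb_or l0.
rewrite ?(negbTE lx0) ?(negbTE x0).
have eline : line (l *: x) = line x.
  rewrite /line; apply/funext => y; apply/propext; split.
    by case=> c [c0 ->]; exists (c * l); rewrite scalerA mulf_neq0.
  case=> c [c0 ->]; exists (c / l); rewrite scalerA mulf_neq0 ?invr_eq0 //.
  by rewrite divfK.
have erep : rep (l *: x) = rep x by rewrite /rep eline.
have euu : uu (l *: x) = uu x by rewrite /uu erep.
have emu : mu (l *: x) = l * mu x.
  have h1 := muP _ lx0; have h2 := muP _ x0.
  rewrite erep in h1.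
  have : (mu (l *: x) - l * mu x) *: rep x = 0.
    by rewrite scalerBl -h1 -scalerA -h2 subrr.
  by move/eqP; rewrite scaler_eq0 (negbTE (rep0 _ x0)) orbF subr_eq0 => /eqP.
by rewrite euu emu scalerA.
Qed.

Lemma geom (R : realType) (g : R) N : (\sum_(k < N) g ^+ k) * (1 - g) = 1 - g ^+ N.
Proof.
elim: N => [|N IH]; first by rewrite big_ord0 mul0r expr0 subrr.
rewrite big_ord_recr /= mulrDl IH exprS; ring.
Qed.

Section PsiSec.
Variables (R : realType) (n m : nat) (Sigma : finType).
Variables (A : Sigma -> 'M[R]_n) (B : Sigma -> 'M[R]_(n, m)).
Variable Psi : controller R n m Sigma.

Fixpoint stt (x : 'cV[R]_n) (h : seq Sigma) : seq 'cV[R]_n :=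
  match h with
  | [::] => [:: x]
  | i :: h' => (A i *m head 0 (stt x h') + B i *m Psi (stt x h') h') :: stt x h'
  end.

Lemma mhS (s : nat -> Sigma) k : modes_hist s k.+1 = s k :: modes_hist s k.
Proof. by rewrite /modes_hist mkseqS rev_rcons. Qed.

Lemma sh_stt s x k : state_hist A B Psi s x k = stt x (modes_hist s k).
Proof. by elim: k => [//|k IH] /=; rewrite IH mhS. Qed.

Definition wpsi x : strat R m Sigma := fun h => Psi (stt x h) h.

Lemma tr_traj s x k : tr A B x (wpsi x) s k = traj A B Psi s x k.
Proof.
elim: k => [//|k IH].
rewrite /traj /= IH /traj sh_stt /=.
by rewrite /wpsi.
Qed.

Lemma psi_bound (C g : R) : 1 < C -> 0 <= g -> g < 1 ->
  (forall (x0 : 'cV[R]_n) (s : nat -> Sigma) (k : nat),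
      enorm (traj A B Psi s x0 k) <= C * g ^+ k * enorm x0) ->
  forall x s N, psum A B x (wpsi x) s N <= (1 + C * g / (1 - g)) * enorm x.
Proof.
move=> C1 g0 g1 H x s N.
have e0 := enorm_ge0 x.
have q : 0 < 1 - g by rewrite subr_gt0.
have K10 : 0 <= C * g / (1 - g) by rewrite divr_ge0 ?mulr_ge0 //; [lra|lra].
case: N => [|N].
  by rewrite /psum big_ord0 mulr_ge0 //; lra.
rewrite /psum big_ord_recl /=.
have S : \sum_(k < N) enorm (tr A B x (wpsi x) s (bump 0 k)) <=
    \sum_(k < N) (C * g * enorm x) * g ^+ k.
  apply: ler_sum => k _; have -> : bump 0 k = k.+1 by [].
  rewrite tr_traj; apply: le_trans (H x s k.+1) _; rewrite exprS; rewrite le_eqVlt; apply/orP; left; apply/eqP; ring.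
have G : \sum_(k < N) g ^+ k <= (1 - g)^-1.
  rewrite -[(1 - g)^-1]mul1r ler_pdivlMr // geom; have := exprn_ge0 N g0; lra.
rewrite -mulr_sumr in S.
have : C * g * enorm x * \sum_(k < N) g ^+ k <= C * g * enorm x * (1 - g)^-1.
  by rewrite ler_wpM2l // !mulr_ge0 //; lra.
have -> : (1 + C * g / (1 - g)) * enorm x = enorm x + C * g * enorm x * (1 - g)^-1.
  by rewrite mulrDl mul1r -!mulrA [(1 - g)^-1 * _]mulrC.
lra.
Qed.

End PsiSec.

Local Close Scope classical_set_scope.
Unset Implicit Arguments.

Theorem mainTheorem5 (R : realType) (n m : nat) (Sigma : finType)
  (A : Sigma -> 'M[R]_n) (B : Sigma -> 'M[R]_(n, m))
  (Psi : controller R n m Sigma) (C gamma : R) :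
  (0 < #|Sigma|)%N ->
  1 < C -> 0 <= gamma -> gamma < 1 ->
  (forall (x0 : 'cV[R]_n) (s : nat -> Sigma) (k : nat),
      enorm (traj A B Psi s x0 k) <= C * gamma ^+ k * enorm x0) ->
  exists V : 'cV[R]_n -> R,
    [/\ is_norm V,
        (forall x, enorm x <= V x /\ V x <= C / (1 - gamma) * enorm x) &
        exists Phi : 'cV[R]_n -> 'cV[R]_m,
          [/\ (forall (l : R) (x : 'cV[R]_n), Phi (l *: x) = l *: Phi x),
              (forall (i : Sigma) (x : 'cV[R]_n),
                  V (A i *m x + B i *m Phi x) <= (1 - (1 - gamma) / C) * V x) &
              UES_static A B Phi]].
Proof.
move=> hS C1 g0 g1 H.
case/card_gt0P: hS => s0 _.
set K1 := 1 + C * gamma / (1 - gamma).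
set K := C / (1 - gamma).
have q : 0 < 1 - gamma by rewrite subr_gt0.
have K0 : 0 < K by rewrite divr_gt0 //; lra.
have K1K : K1 < K.
  rewrite /K1 /K -(ltr_pM2r q) mulrDl mul1r !divfK ?gt_eqF //; nra.
have Kg1 : 1 < K by rewrite /K ltr_pdivlMr // mul1r; lra.
have eK : K^-1 = (1 - gamma) / C by rewrite invf_div.
have Hex : forall x, exists w, forall s N, psum A B x w s N <= K1 * enorm x.
  by move=> x; exists (wpsi A B Psi x); exact: psi_bound.
pose V := J A B.
have Vle : forall x, V x <= K * enorm x.
  move=> x; apply: le_trans (J_le s0 Hex x) _; rewrite ler_wpM2r ?enorm_ge0 //; lra.
exists V; split.
- split.
  + move=> x; exact: (J_ge0 s0 Hex x).
  + move=> x; exact: (J_eq0 s0 Hex (x:=x)).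
  + move=> l x; exact: (J_Z s0 Hex l x).
  + move=> x y; exact: (J_sub s0 Hex x y).
- by move=> x; split; [exact: (J_ge s0 Hex x)|exact: Vle].
pose rho := 1 - K^-1.
have rho0 : 0 <= rho.
  rewrite /rho subr_ge0 invf_le1 //; lra.
have rho1 : rho < 1 by rewrite /rho ltrBlDr ltrDl invr_gt0.
pose P (x : 'cV[R]_n) (u : 'cV[R]_m) := forall i, V (A i *m x + B i *m u) <= rho * V x.
have Ph : forall l x u, P x u -> P (l *: x) (l *: u).
  move=> l x u Pxu i.
  have -> : A i *m (l *: x) + B i *m (l *: u) = l *: (A i *m x + B i *m u).
    by rewrite -!scalemxAr scalerDr.
  rewrite /V !(J_Z s0 Hex) mulrCA; apply: ler_wpM2l => //; exact: Pxu.
have Pe : forall x, exists u, P x u.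
  move=> x; exact: (contr s0 Hex K0 K1K x).
have [Phi [Phom PPhi]] := homog_select Ph Pe.
exists Phi; split => //.
  by move=> i x; rewrite -eK; exact: PPhi.
exists K, rho; split => //.
move=> x0 s k.
have Vk : V (traj_static A B Phi s x0 k) <= rho ^+ k * V x0.
  elim: k => [|k IH]; first by rewrite expr0 mul1r.
  rewrite /= exprS -mulrA.
  apply: le_trans (PPhi _ (s k)) _; apply: ler_wpM2l => //.
apply: le_trans (J_ge s0 Hex _) _.
apply: le_trans Vk _.
rewrite [K * _]mulrC -mulrA; apply: ler_wpM2l; first exact: exprn_ge0.
exact: (Vle x0).
Qed.
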